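(* Let $\{(G_\alpha,d_\alpha)\}_{\alpha\in\mathbb I}$ be a strict long directed family of metrizable topological groups, $d_\alpha$ a compatible metric on $G_\alpha$, whose bonding maps (inclusions $G_\alpha\to G_\beta$, $\alpha\leq\beta$, which are group homomorphisms) are Lipschitz with a fixed constant $L>0$ (in particular, isometries). Then $\{G_\alpha\}_{\alpha\in\mathbb I}$ satisfies ACP, and the colimit space topology on $G=\bigcup_\alpha G_\alpha$ is generated by the metric $$d(x,y):=\limsup_{\alpha\in\mathbb I}d_\alpha(x,y)=\inf_{\alpha\in\mathbb I}\sup\{d_\beta(x,y)\mid x,y\in G_\beta,\ \beta\geq\alpha\}.$$
   Context: Strict means the bonding maps are topological embeddings; long means every countable subset of $\mathbb I$ has an upper bound. The colimit space topology is $\mathscr T=\{U\subseteq G\mid U\cap G_\alpha\text{ open in }G_\alpha\ \forall\alpha\}$. ACP means $\mathscr T$ coincides with the finest group topology on $G$ making all inclusions continuous (equivalently, $(G,\mathscr T)$ is a topological group). *)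

(* Defs.v *)
From mathcomp Require Import all_boot all_order all_algebra.
From mathcomp Require Import all_classical all_reals ereal.
Set Implicit Arguments. Unset Strict Implicit. Unset Printing Implicit Defensive.
Import Order.TTheory GRing.Theory Num.Theory.
Local Open Scope classical_set_scope.
Local Open Scope ring_scope.

Section Defs.
Variable R : realType.

Definition is_group (G : Type) (mul : G -> G -> G) (inv : G -> G) (e : G) :=
  [/\ forall x y z, mul x (mul y z) = mul (mul x y) z,
      forall x, mul e x = x /\ mul x e = x &
      forall x, mul (inv x) x = e /\ mul x (inv x) = e].

Definition is_subgroup (G : Type) (mul : G -> G -> G) (inv : G -> G) (e : G)
  (A : set G) :=
  [/\ A e, forall x y, A x -> A y -> A (mul x y) & forall x, A x -> A (inv x)].

Definition metric_on (G : Type) (A : set G) (d : G -> G -> R) :=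
  forall x y z, A x -> A y -> A z ->
    [/\ 0 <= d x y, d x y = 0 <-> x = y, d x y = d y x &
        d x z <= d x y + d y z].

Definition mopen (G : Type) (A : set G) (d : G -> G -> R) (U : set G) :=
  U `<=` A /\
  forall x, U x -> exists2 eps : R, 0 < eps &
    forall y, A y -> d x y < eps -> U y.

Definition prod_open (G : Type) (tau : set G -> Prop) (W : set (G * G)) :=
  forall p, W p -> exists U, exists V,
    [/\ tau U, tau V, U p.1, V p.2 & U `*` V `<=` W].

Definition is_topological_group (G : Type) (mul : G -> G -> G) (inv : G -> G)
  (e : G) (A : set G) (tau : set G -> Prop) :=
  [/\ is_subgroup mul inv e A,
      forall U, tau U ->
        prod_open tau [set p | A p.1 /\ A p.2 /\ U (mul p.1 p.2)] &
      forall U, tau U -> tau [set x | A x /\ U (inv x)]].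

Definition long_directed (I : Type) (le : I -> I -> Prop) :=
  [/\ forall i, le i i,
      forall i j k, le i j -> le j k -> le i k,
      forall i j, exists k, le i k /\ le j k &
      forall S : set I, countable S -> exists u, forall i, S i -> le i u].

Definition colim_open (I G : Type) (Gs : I -> set G) (d : I -> G -> G -> R)
  (U : set G) := forall a, mopen (Gs a) (d a) (U `&` Gs a).

Definition colim_dist (I G : Type) (le : I -> I -> Prop) (Gs : I -> set G)
  (d : I -> G -> G -> R) (x y : G) : \bar R :=
  ereal_inf [set ereal_sup [set (d b x y)%:E | b in [set b | le a b /\ Gs b x /\ Gs b y]]
            | a in [set: I]].

End Defs.

(* Main.v *)
Require Import Defs.
From mathcomp Require Import all_boot all_order all_algebra.
From mathcomp Require Import all_classical all_reals ereal.
Set Implicit Arguments. Unset Strict Implicit.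
Import Order.TTheory GRing.Theory Num.Theory.
Local Open Scope classical_set_scope.
Local Open Scope ring_scope.

Lemma archi_inv (R : realType) (eps : R) : 0 < eps -> exists n : nat, n.+1%:R^-1 < eps.
Proof.
move=> e0; exists (Num.truncn eps^-1).
rewrite invf_plt ?posrE ?ltr0Sn //; exact: truncnS_gt.
Qed.

Lemma le_of_inv (R : realType) (r s : R) :
  (forall n : nat, r <= s + n.+1%:R^-1) -> r <= s.
Proof.
move=> H; rewrite leNgt; apply/negP => sr.
have [n hn] : exists n : nat, n.+1%:R^-1 < r - s by apply: archi_inv; rewrite subr_gt0.
by have := H n; rewrite -lerBlDl leNgt hn.
Qed.

Lemma ub_seq (I : Type) (le : I -> I -> Prop) : long_directed le ->
  forall a : nat -> I, exists u, forall n, le (a n) u.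
Proof.
case=> _ _ _ hl a; have [u hu] := hl (range a) (card_image_le _ _).
by exists u => n; apply: hu; exists n.
Qed.

Lemma cover2 (I G : Type) (le : I -> I -> Prop) (Gs : I -> set G) :
  long_directed le -> (forall x, exists a, Gs a x) ->
  (forall a b, le a b -> Gs a `<=` Gs b) ->
  forall x y, exists c, Gs c x /\ Gs c y.
Proof.
case=> _ _ hj _ hc hm x y.
have [a ha] := hc x; have [b hb] := hc y; have [k [ak bk]] := hj a b.
by exists k; split; [exact: hm ak _ ha | exact: hm bk _ hb].
Qed.

Lemma cd_ub (R : realType) (I G : Type) (le : I -> I -> Prop) (Gs : I -> set G)
  (d : I -> G -> G -> R) (L : R) :
  (forall a b, le a b -> forall x y, Gs a x -> Gs a y -> d b x y <= L * d a x y) ->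
  forall a x y, Gs a x -> Gs a y ->
  (colim_dist le Gs d x y <= (L * d a x y)%:E)%E.
Proof.
move=> hL a x y hx hy; apply: ge_ereal_inf.
exists (ereal_sup [set (d b x y)%:E | b in [set b | le a b /\ Gs b x /\ Gs b y]]).
  by exists a.
apply: ge_ereal_sup => _ [b [ab [bx byy]] <-]; rewrite lee_fin; exact: hL.
Qed.

Lemma cd_ge0 (R : realType) (I G : Type) (le : I -> I -> Prop) (Gs : I -> set G)
  (d : I -> G -> G -> R) :
  long_directed le -> (forall x, exists a, Gs a x) ->
  (forall a b, le a b -> Gs a `<=` Gs b) ->
  (forall a, metric_on (Gs a) (d a)) ->
  forall x y, (0 <= colim_dist le Gs d x y)%E.
Proof.
move=> hl hc hm hd x y; have [c [cx cy]] := cover2 hl hc hm x y.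
apply: le_ereal_inf_tmp => _ [a _ <-].
have [_ _ hj _] := hl; have [k [ak ck]] := hj a c.
apply: le_ereal_sup_tmp; exists (d k x y)%:E.
  by exists k => //; split => //; split; apply: hm ck _ _.
by rewrite lee_fin; have [] := hd k x y x (hm _ _ ck _ cx) (hm _ _ ck _ cy) (hm _ _ ck _ cx).
Qed.

Lemma cd_fin (R : realType) (I G : Type) (le : I -> I -> Prop) (Gs : I -> set G)
  (d : I -> G -> G -> R) (L : R) :
  long_directed le -> (forall x, exists a, Gs a x) ->
  (forall a b, le a b -> Gs a `<=` Gs b) ->
  (forall a, metric_on (Gs a) (d a)) ->
  (forall a b, le a b -> forall x y, Gs a x -> Gs a y -> d b x y <= L * d a x y) ->
  forall x y, colim_dist le Gs d x y \is a fin_num.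
Proof.
move=> hl hc hm hd hL x y; have [c [cx cy]] := cover2 hl hc hm x y.
rewrite ge0_fin_numE; last exact: cd_ge0.
exact: le_lt_trans (cd_ub hL cx cy) (ltry _).
Qed.

Lemma cd_u (R : realType) (I G : Type) (le : I -> I -> Prop) (Gs : I -> set G)
  (d : I -> G -> G -> R) (L : R) :
  long_directed le -> (forall x, exists a, Gs a x) ->
  (forall a b, le a b -> Gs a `<=` Gs b) ->
  (forall a, metric_on (Gs a) (d a)) ->
  (forall a b, le a b -> forall x y, Gs a x -> Gs a y -> d b x y <= L * d a x y) ->
  forall x y, exists u, forall b, le u b ->
    [/\ Gs b x, Gs b y & d b x y <= fine (colim_dist le Gs d x y)].
Proof.
move=> hl hc hm hd hL x y; have [c [cx cy]] := cover2 hl hc hm x y.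
have hf := cd_fin hl hc hm hd hL x y.
set D := colim_dist le Gs d x y in hf *.
have : forall n : nat, exists a, (ereal_sup [set (d b x y)%:E | b in [set b | le a b /\ Gs b x /\ Gs b y]]
   < D + (n.+1%:R^-1)%:E)%E.
  move=> n; have [] := @lb_ereal_inf_adherent R _ (n.+1%:R^-1) _ hf.
    by rewrite invr_gt0 ltr0Sn.
  by move=> _ [a _ <-] h; exists a.
move=> /choice [a ha]; have [u1 hu1] := ub_seq hl a.
have [_ htr hj _] := hl; have [u [u1u cu]] := hj u1 c.
exists u => b ub; have cb := htr _ _ _ cu ub.
have xb := hm _ _ cb _ cx; have yb := hm _ _ cb _ cy.
split => //; apply: le_of_inv => n.
rewrite -lee_fin EFinD fineK //; apply/ltW; apply: le_lt_trans (ha n).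
apply: ereal_sup_ubound; exists b => //; split => //.
exact: htr (htr _ _ _ (hu1 n) u1u) ub.
Qed.

Lemma cd_sym_le (R : realType) (I G : Type) (le : I -> I -> Prop) (Gs : I -> set G)
  (d : I -> G -> G -> R) :
  (forall a, metric_on (Gs a) (d a)) ->
  forall x y, (colim_dist le Gs d x y <= colim_dist le Gs d y x)%E.
Proof.
move=> hd x y; apply: le_ereal_inf_tmp => _ [a _ <-].
apply: ge_ereal_inf; exists (ereal_sup [set (d b x y)%:E | b in [set b | le a b /\ Gs b x /\ Gs b y]]).
  by exists a.
apply: ge_ereal_sup => _ [b [ab [bx byy]] <-]; apply: le_ereal_sup_tmp.
exists (d b y x)%:E; first by exists b.
by have [_ _ -> _] := hd b x y x bx byy bx.
Qed.

Lemma r_metric (R : realType) (I G : Type) (le : I -> I -> Prop) (Gs : I -> set G)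
  (d : I -> G -> G -> R) (L : R) :
  long_directed le -> (forall x, exists a, Gs a x) ->
  (forall a b, le a b -> Gs a `<=` Gs b) ->
  (forall a, metric_on (Gs a) (d a)) ->
  (forall a b, le a b -> forall x y, Gs a x -> Gs a y -> d b x y <= L * d a x y) ->
  metric_on [set: G] (fun x y => fine (colim_dist le Gs d x y)).
Proof.
move=> hl hc hm hd hL x y z _ _ _.
have fin := cd_fin hl hc hm hd hL.
have ge0 : forall x y, 0 <= fine (colim_dist le Gs d x y).
  by move=> p q; rewrite -lee_fin fineK //; exact: cd_ge0.
have [hrf htr hj _] := hl.
have rub : forall a p q, Gs a p -> Gs a q -> fine (colim_dist le Gs d p q) <= L * d a p q.
  by move=> a p q hp hq; rewrite -lee_fin fineK //; exact: cd_ub.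
split => //.
- split => [h|<-].
    have [u hu] := cd_u hl hc hm hd hL x y.
    have [xu yu hle] := hu u (hrf u).
    have [h0 [h1 _] _ _] := hd u x y x xu yu xu.
    by apply: h1; apply/eqP; rewrite eq_le h0 andbT -h.
  have [c cx] := hc x; apply/eqP; rewrite eq_le ge0 andbT.
  have [_ [_ h2] _ _] := hd c x x x cx cx cx.
  by have := rub c x x cx cx; rewrite (h2 erefl) mulr0.
- by congr fine; apply/le_anti; rewrite !cd_sym_le.
- have [u1 hu1] := cd_u hl hc hm hd hL x y.
  have [u2 hu2] := cd_u hl hc hm hd hL y z.
  have [k [k1 k2]] := hj u1 u2.
  rewrite -lee_fin fineK // EFinD; apply: ge_ereal_inf.
  exists (ereal_sup [set (d b x z)%:E | b in [set b | le k b /\ Gs b x /\ Gs b z]]).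
    by exists k.
  apply: ge_ereal_sup => _ [b [kb [bx bz]] <-]; rewrite lee_fin.
  have [_ byy h1] := hu1 b (htr _ _ _ k1 kb).
  have [_ _ h2] := hu2 b (htr _ _ _ k2 kb).
  have [_ _ _ ht] := hd b x y z bx byy bz.
  exact: le_trans ht (lerD h1 h2).
Qed.

Lemma seq_contra (R : realType) T (f : T -> R) (P : T -> Prop) :
  (forall ys : nat -> T, (forall n, f (ys n) < n.+1%:R^-1) -> exists n, P (ys n)) ->
  exists2 eps, 0 < eps & forall y, f y < eps -> P y.
Proof.
move=> H; apply: contrapT => hne.
have hn : forall n : nat, exists y, f y < n.+1%:R^-1 /\ ~ P y.
  move=> n; apply: contrapT => hno; apply: hne; exists n.+1%:R^-1.
    by rewrite invr_gt0 ltr0Sn.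
  move=> y hy; apply: contrapT => nPy; apply: hno; by exists y.
have [ys hys] := choice hn.
have [n Pn] := H ys (fun n => (hys n).1).
exact: (hys n).2 Pn.
Qed.

Lemma r_seq (R : realType) (I G : Type) (le : I -> I -> Prop) (Gs : I -> set G)
  (d : I -> G -> G -> R) (r : G -> G -> R) :
  long_directed le ->
  (forall p q, exists u, forall b, le u b -> [/\ Gs b p, Gs b q & d b p q <= r p q]) ->
  forall p q : nat -> G, exists u, forall b, le u b -> forall n,
    [/\ Gs b (p n), Gs b (q n) & d b (p n) (q n) <= r (p n) (q n)].
Proof.
move=> hl hu p q.
have [f hf] := choice (fun n => hu (p n) (q n)).
have [u hfu] := ub_seq hl f.
have [_ htr _ _] := hl.
exists u => b ub n; apply: hf; exact: htr (hfu n) ub.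
Qed.

Lemma ball_open (R : realType) G (r : G -> G -> R) :
  metric_on [set: G] r -> forall x eps, mopen [set: G] r [set y | r x y < eps].
Proof.
move=> hm x eps; split => // y /= hy; exists (eps - r x y); first by rewrite subr_gt0.
move=> z _ hz /=; have [_ _ _ ht] := hm x y z I I I.
apply: le_lt_trans ht _; by rewrite -ltrBrDl.
Qed.

Lemma colim_mopen (R : realType) (I G : Type) (le : I -> I -> Prop) (Gs : I -> set G)
  (d : I -> G -> G -> R) (r : G -> G -> R) :
  long_directed le ->
  (forall p q, exists u, forall b, le u b -> [/\ Gs b p, Gs b q & d b p q <= r p q]) ->
  forall U, colim_open Gs d U -> mopen [set: G] r U.
Proof.
move=> hl hu U hU; split => // x Ux.
suff [eps e0 hb] : exists2 eps : R, 0 < eps & forall y, r x y < eps -> U y.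
  by exists eps => // y _ /hb.
apply: seq_contra => ys hys.
have [u hu'] := r_seq hl hu (fun=> x) ys.
have [hrf _ _ _] := hl.
have [xu _ _] := hu' u (hrf u) 0%N.
have [eps e0 hb] := (hU u).2 x (conj Ux xu).
have [n hn] := archi_inv e0.
have [_ yu hle] := hu' u (hrf u) n.
exists n; have [] := hb (ys n) yu (le_lt_trans hle (lt_trans (hys n) hn)) => //.
Qed.

Lemma mopen_colim (R : realType) (I G : Type) (Gs : I -> set G)
  (d : I -> G -> G -> R) (r : G -> G -> R) (L : R) : 0 < L ->
  (forall a p q, Gs a p -> Gs a q -> r p q <= L * d a p q) ->
  forall U, mopen [set: G] r U -> colim_open Gs d U.
Proof.
move=> L0 hub U hU a; split => [y []//|x [Ux xa]].
have [eps e0 hb] := hU.2 x Ux.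
exists (eps / L); first by rewrite divr_gt0.
move=> y ya hy; split => //; apply: hb => //.
apply: le_lt_trans (hub a x y xa ya) _.
by rewrite mulrC -ltr_pdivlMr.
Qed.

Lemma colim_tg (R : realType) (I G : Type) (le : I -> I -> Prop)
  (mul : G -> G -> G) (inv : G -> G) (e : G) (Gs : I -> set G)
  (d : I -> G -> G -> R) (r : G -> G -> R) (L : R) :
  long_directed le -> 0 < L ->
  (forall p q, exists u, forall b, le u b -> [/\ Gs b p, Gs b q & d b p q <= r p q]) ->
  (forall a p q, Gs a p -> Gs a q -> r p q <= L * d a p q) ->
  metric_on [set: G] r ->
  (forall a, is_topological_group mul inv e (Gs a) (mopen (Gs a) (d a))) ->
  is_topological_group mul inv e [set: G] (colim_open Gs d).
Proof.
move=> hl L0 hu hub hmet htg.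
have [hrf htr hj _] := hl.
have ball_c : forall x eps, colim_open Gs d [set y | r x y < eps].
  by move=> x eps; apply: mopen_colim L0 hub _ (ball_open hmet x eps).
split => //.
- move=> U hU p [_ [_ Up]].
  have [eps e0 hb] : exists2 eps : R, 0 < eps & forall q : G * G,
      Num.max (r p.1 q.1) (r p.2 q.2) < eps -> U (mul q.1 q.2).
    apply: seq_contra => ys hys.
    have [u1 hu1] := r_seq hl hu (fun=> p.1) (fun n => (ys n).1).
    have [u2 hu2] := r_seq hl hu (fun=> p.2) (fun n => (ys n).2).
    have [k [k1 k2]] := hj u1 u2.
    have [hsg hmul _] := htg k.
    have [p1k _ _] := hu1 k k1 0%N.
    have [p2k _ _] := hu2 k k2 0%N.
    have [_ hsm _] := hsg.
    have [U' [V' [oU oV U'p V'p hsub]]] :=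
      hmul (U `&` Gs k) (hU k) p (conj p1k (conj p2k (conj Up (hsm _ _ p1k p2k)))).
    have [eps1 e1 hb1] := oU.2 _ U'p.
    have [eps2 e2 hb2] := oV.2 _ V'p.
    have [n hn] : exists n : nat, n.+1%:R^-1 < Num.min eps1 eps2 by apply: archi_inv; rewrite lt_min e1 e2.
    exists n.
    have [_ y1k hle1] := hu1 k k1 n.
    have [_ y2k hle2] := hu2 k k2 n.
    have := hys n; rewrite gt_max => /andP [h1 h2].
    move: hn; rewrite lt_min => /andP [hn1 hn2].
    have [_ [_ []]] := hsub (ys n) (conj (hb1 _ y1k (le_lt_trans hle1 (lt_trans h1 hn1)))
                                         (hb2 _ y2k (le_lt_trans hle2 (lt_trans h2 hn2)))) => //.
  exists [set y | r p.1 y < eps], [set y | r p.2 y < eps]; split; [exact: ball_c | exact: ball_c | | | ].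
  + by have [_ [_ h] _ _] := hmet p.1 p.1 p.1 Logic.I Logic.I Logic.I; rewrite /= h.
  + by have [_ [_ h] _ _] := hmet p.2 p.2 p.2 Logic.I Logic.I Logic.I; rewrite /= h.
  + move=> q [/= h1 h2]; split => //; split => //; apply: hb.
    by rewrite gt_max h1 h2.
- move=> U hU; apply: mopen_colim L0 hub _ _; split => // x [_ Uix].
  suff [eps e0 hb] : exists2 eps : R, 0 < eps & forall y, r x y < eps -> U (inv y).
    by exists eps => // y _ /hb.
  apply: seq_contra => ys hys.
  have [u hu'] := r_seq hl hu (fun=> x) ys.
  have [xu _ _] := hu' u (hrf u) 0%N.
  have [[_ _ hsi] _ hinv] := htg u.
  have [eps e0 hb] := (hinv _ (hU u)).2 x (conj xu (conj Uix (hsi _ xu))).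
  have [n hn] := archi_inv e0.
  have [_ yu hle] := hu' u (hrf u) n.
  exists n; have [_ []] := hb (ys n) yu (le_lt_trans hle (lt_trans (hys n) hn)) => //.
Qed.

Theorem corollary2p10 (R : realType) (I : Type) (le : I -> I -> Prop)
  (G : Type) (mul : G -> G -> G) (inv : G -> G) (e : G)
  (Gs : I -> set G) (d : I -> G -> G -> R) (L : R) :
  long_directed le ->
  is_group mul inv e ->
  (* G is the union of the increasing family of subgroups G_a *)
  (forall x, exists a, Gs a x) ->
  (forall a b, le a b -> Gs a `<=` Gs b) ->
  (* each (G_a, d_a) is a metric space whose metric topology is a group topology *)
  (forall a, metric_on (Gs a) (d a)) ->
  (forall a, is_topological_group mul inv e (Gs a) (mopen (Gs a) (d a))) ->
  (* strict: the inclusions G_a -> G_b are topological embeddings *)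
  (forall a b, le a b -> forall U,
     mopen (Gs a) (d a) U <-> exists2 V, mopen (Gs b) (d b) V & U = V `&` Gs a) ->
  (* bonding maps are L-Lipschitz *)
  0 < L ->
  (forall a b, le a b -> forall x y, Gs a x -> Gs a y -> d b x y <= L * d a x y) ->
  (* conclusions: ACP, and the colimit topology is generated by the metric d *)
  is_topological_group mul inv e [set: G] (colim_open Gs d) /\
  (forall x y, colim_dist le Gs d x y \is a fin_num) /\
  metric_on [set: G] (fun x y => fine (colim_dist le Gs d x y)) /\
  (forall U, colim_open Gs d U <->
     mopen [set: G] (fun x y => fine (colim_dist le Gs d x y)) U).
Proof.
move=> hl hgrp hc hm hd htg hstrict L0 hL.
have hmet := r_metric hl hc hm hd hL.
have hu := cd_u hl hc hm hd hL.
have hfin := cd_fin hl hc hm hd hL.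
have hub : forall a p q, Gs a p -> Gs a q ->
    fine (colim_dist le Gs d p q) <= L * d a p q.
  by move=> a p q hp hq; rewrite -lee_fin fineK //; exact: cd_ub.
split; first exact: colim_tg hl L0 hu hub hmet htg.
split; first exact: hfin.
split; first exact: hmet.
move=> U; split; [exact: colim_mopen hl hu U | exact: mopen_colim L0 hub U].
Qed.
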